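(* Let $G$ be a group with a discrete left-invariant preordering $\preceq$, and let $a$ be a least positive element. Then for all $g,h\in G$: (1) if $1\preceq g$ and $1\preceq h$ then $1\prec agh$; (2) if $g\prec 1$ and $h\prec 1$ then $agh\prec 1$; (3) if $1\prec g$ then $1\prec aga^{-1}$ and $1\prec a^{-1}ga$; if $g\sim 1$ then $aga^{-1}\sim 1$ and $a^{-1}ga\sim 1$; if $g\prec 1$ then $aga^{-1}\prec 1$ and $a^{-1}ga\prec 1$.
   Context: A left-invariant preordering on a group $G$ is a relation $\preceq$ on $G$ that is reflexive, transitive and complete (for all $g,g'$ one has $g\preceq g'$ or $g'\preceq g$), and such that $g\preceq g'$ implies $hg\preceq hg'$ for all $h\in G$. Write $g\sim g'$ if $g\preceq g'$ and $g'\preceq g$, and $g\prec g'$ if $g\preceq g'$ and not $g\sim g'$. The preordering is discrete if there exists $a\in G$ with $1\prec a$ such that there is no $b\in G$ with $1\prec b\prec a$; such an $a$ is called a least positive element. *)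

(* Defs.v *)
Definition is_group {G : Type} (mul : G -> G -> G) (one : G) (inv : G -> G) : Prop :=
  (forall x y z, mul x (mul y z) = mul (mul x y) z) /\
  (forall x, mul one x = x) /\ (forall x, mul x one = x) /\
  (forall x, mul (inv x) x = one) /\ (forall x, mul x (inv x) = one).

Definition left_inv_preorder {G : Type} (mul : G -> G -> G) (le : G -> G -> Prop) : Prop :=
  (forall g, le g g) /\
  (forall g g' g'', le g g' -> le g' g'' -> le g g'') /\
  (forall g g', le g g' \/ le g' g) /\
  (forall g g' h, le g g' -> le (mul h g) (mul h g')).

Definition pequiv {G : Type} (le : G -> G -> Prop) (g g' : G) : Prop := le g g' /\ le g' g.
Definition plt {G : Type} (le : G -> G -> Prop) (g g' : G) : Prop := le g g' /\ ~ pequiv le g g'.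

Definition least_positive {G : Type} (le : G -> G -> Prop) (one a : G) : Prop :=
  plt le one a /\ ~ (exists b, plt le one b /\ plt le b a).

Definition discrete_preorder {G : Type} (le : G -> G -> Prop) (one : G) : Prop :=
  exists a, least_positive le one a.

(* Main.v *)
Require Import Defs.
From Stdlib Require Import Setoid Classical.

Theorem mainTheorem3 (G : Type) (mul : G -> G -> G) (one : G) (inv : G -> G)
  (le : G -> G -> Prop) (a : G)
  (hG : is_group mul one inv)
  (hle : left_inv_preorder mul le)
  (hdisc : discrete_preorder le one)
  (ha : least_positive le one a) :
  forall g h : G,
    (le one g -> le one h -> plt le one (mul a (mul g h))) /\
    (plt le g one -> plt le h one -> plt le (mul a (mul g h)) one) /\
    (plt le one g -> plt le one (mul (mul a g) (inv a)) /\ plt le one (mul (mul (inv a) g) a)) /\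
    (pequiv le g one -> pequiv le (mul (mul a g) (inv a)) one /\ pequiv le (mul (mul (inv a) g) a) one) /\
    (plt le g one -> plt le (mul (mul a g) (inv a)) one /\ plt le (mul (mul (inv a) g) a) one).
Proof.
  destruct hG as [assoc [l1 [r1 [linv rinv]]]].
  destruct hle as [refl [trans [tot lle]]].
  assert (pltE : forall x y, plt le x y <-> ~ le y x).
  { intros x y; unfold plt, pequiv; split.
    - intros [H1 H2] H; apply H2; split; assumption.
    - intro H; destruct (tot x y) as [H'|H']; [split; [exact H'| intros [_ H2]; auto] | contradiction]. }
  assert (LI : forall h x y, le x y <-> le (mul h x) (mul h y)).
  { intros h x y; split; [apply lle|].
    intro H; apply (lle _ _ (inv h)) in H; rewrite !assoc, linv, !l1 in H; exact H. }
  destruct ha as [ha1 ha2]. rewrite pltE in ha1.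
  assert (F0 : forall x, ~ le x one -> le a x).
  { intros x Hx; apply NNPP; intro Hn; apply ha2; exists x; rewrite !pltE; auto. }
  assert (K1 : forall x y, mul (mul x y) (inv y) = x).
  { intros; rewrite <- assoc, rinv, r1; reflexivity. }
  assert (K2 : forall x y, mul (mul x (inv y)) y = x).
  { intros; rewrite <- assoc, linv, r1; reflexivity. }
  assert (CM : forall u v, mul (mul (mul a u) (inv a)) (mul (mul a v) (inv a)) = mul (mul a (mul u v)) (inv a)).
  { intros; rewrite !assoc, K2; reflexivity. }
  assert (Pconj : forall g, ~ le g one -> ~ le (mul (mul a g) (inv a)) one).
  { intros g Hg Hc. destruct (classic (le one (mul g (inv a)))) as [H|H].
    - apply (lle _ _ a) in H; rewrite r1, assoc in H. apply ha1; eauto.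
    - rewrite (LI (inv g)) in H. rewrite assoc, linv, l1, r1 in H.
      rewrite (LI a), rinv in H. apply H.
      exfalso. apply Hg. pose proof (F0 _ H) as H2.
      rewrite <- (r1 a) in H2 at 1. rewrite <- LI in H2.
      rewrite (LI g), r1, rinv in H2. exact H2. }
  assert (EA : forall e, le e one -> le (mul (mul a e) (inv a)) one).
  { intros e He. apply NNPP; intro Hn. pose proof (F0 _ Hn) as H.
    rewrite <- assoc, <- (r1 a) in H at 1. rewrite <- LI in H.
    rewrite (LI (inv e)), r1, assoc, linv, l1 in H.
    assert (le one (inv e)) by (rewrite (LI e), r1, rinv; exact He).
    assert (le one (inv a)) by eauto.
    apply ha1. rewrite (LI a), r1, rinv in H1. exact H1. }
  assert (EB : forall e, le one e -> le one (mul (mul a e) (inv a))).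
  { intros e He. apply NNPP; intro Hn.
    assert (le (inv e) one) by (rewrite (LI e), r1, rinv; exact He).
    apply EA in H. apply Hn. rewrite (LI (mul (mul a (inv e)) (inv a))), CM, linv, r1, r1, rinv.
    exact H. }
  assert (Nconj : forall g, ~ le one g -> ~ le one (mul (mul a g) (inv a))).
  { intros g Hg H.
    assert (~ le (inv g) one) by (rewrite (LI g), r1, rinv; exact Hg).
    apply Pconj in H0. apply H0.
    rewrite (LI (mul (mul a (inv g)) (inv a))), CM, linv, r1, r1, rinv in H. exact H. }
  assert (CC : forall g, mul (mul a (mul (mul (inv a) g) a)) (inv a) = g).
  { intros; rewrite !assoc, K1, rinv, l1; reflexivity. }
  intros g h. unfold pequiv. rewrite !pltE. split; [|split; [|split; [|split]]].
  - intros Hg Hh Hc.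
    assert (le g (mul g h)) by (rewrite (LI g), r1 in Hh; exact Hh).
    assert (le one (mul g h)) by eauto.
    apply (lle _ _ a) in H0; rewrite r1 in H0. apply ha1; eauto.
  - intros Hg Hh Hc.
    assert (le (mul a g) one).
    { apply NNPP; intro Hn. apply Hg. pose proof (F0 _ Hn) as H.
      rewrite <- (r1 a) in H at 1. rewrite <- LI in H. exact H. }
    rewrite (LI (mul a g)), r1 in Hh. rewrite <- assoc in Hh. eauto.
  - intros Hg. split; [now apply Pconj|].
    intro Hy. destruct (classic (le one (mul (mul (inv a) g) a))) as [H|H].
    + apply EA in Hy. rewrite CC in Hy. auto.
    + apply Nconj in H. rewrite CC in H. destruct (tot one g); auto.
  - intros [Hg1 Hg2]. split; [split; [now apply EA | now apply EB]|].
    split.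
    + apply NNPP; intro Hn. apply Pconj in Hn. rewrite CC in Hn. auto.
    + apply NNPP; intro Hn. apply Nconj in Hn. rewrite CC in Hn. auto.
  - intros Hg. split; [now apply Nconj|].
    intro Hy. destruct (classic (le (mul (mul (inv a) g) a) one)) as [H|H].
    + apply EB in Hy. rewrite CC in Hy. auto.
    + apply Pconj in H. rewrite CC in H. destruct (tot one g); auto.
Qed.
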